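(* For each of the following five cases, and for all real parameters $\lambda\neq0$, $\mu\neq0$ and $k$, let $\mathfrak{g}$ be the $8$-dimensional Lie algebra with basis of one-forms $e^1,\dots,e^8$ whose differentials are as listed ($e^{ij}=e^i\wedge e^j$), equipped with the almost parahermitian structure with $V=\mathrm{span}(e_1,\dots,e_4)$, $H=\mathrm{span}(e_5,\dots,e_8)$, $F=\sum_{i=1}^4e^i\wedge e^{4+i}$, $g=\sum_{i=1}^4(e^i\otimes e^{4+i}+e^{4+i}\otimes e^i)$, $K=\mathrm{id}_V-\mathrm{id}_H$; here $\mathfrak{g}$ is isomorphic to $\mathfrak{h}\oplus\mathbb{R}$ with $\mathfrak{h}$ the listed $7$-dimensional nilpotent Lie algebra (given by $(de^1,\dots,de^7)$): (i) $\mathfrak{h}=(0,0,0,e^{12},e^{23}+e^{14},e^{24},e^{15}-e^{34})$; $\mathfrak{g}$: $(0,\,0,\,-\lambda e^{18},\,0,\,-\mu e^{23}+\lambda e^{78},\,\mu e^{13},\,-\mu e^{12}+\lambda\mu e^{38},\,0)$; (ii) $\mathfrak{h}=(0,0,0,e^{12},e^{23}+e^{14},e^{24}+e^{13},-e^{34}+e^{15})$; $\mathfrak{g}$: $(0,\,0,\,-\lambda e^{18},\,0,\,\lambda e^{78}-\mu e^{23},\,-\lambda\mu e^{28}+\mu e^{13},\,\lambda\mu e^{38}-\mu e^{12},\,0)$; (iii) $\mathfrak{h}=(0,0,e^{12},0,e^{24}+e^{13},e^{23},e^{34}+e^{15}+e^{26})$; $\mathfrak{g}$: $(0,\,-\lambda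 e^{18},\,0,\,0,\,\mu e^{23}+e^{17}+\lambda e^{68}-k\lambda e^{18},\,-\mu e^{13}+\lambda\mu e^{28},\,\mu e^{12},\,0)$; (iv) $\mathfrak{h}=(0,0,0,e^{12},e^{23}+e^{14},-e^{24}+e^{13},-e^{34}+e^{15})$; $\mathfrak{g}$: $(0,\,0,\,-\lambda e^{18},\,0,\,-\mu e^{23}+\lambda e^{78},\,\mu e^{13}+\lambda\mu e^{28},\,-\mu e^{12}+\lambda\mu e^{38},\,0)$; (v) $\mathfrak{h}=(0,0,e^{12},0,e^{13}+e^{24},e^{23},-e^{26}+e^{15}+e^{34})$; $\mathfrak{g}$: $(0,\,-\lambda e^{18},\,0,\,0,\,-e^{17}+\mu e^{23}+\lambda e^{68}+k\lambda e^{18},\,\lambda\mu e^{28}-\mu e^{13},\,\mu e^{12},\,0)$. Then in each case the (left-invariant) structure is nearly parak\''ahler, its intrinsic torsion component $\tau_1$ is nonzero, its metric is Ricci-flat, and its curvature is nonzero (not flat).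
   Context: A tuple $(\sigma_1,\dots,\sigma_m)$ describes a Lie algebra with a basis $e^1,\dots,e^m$ of the dual such that $de^i=\sigma_i$, where $d$ is the Chevalley--Eilenberg differential ($d\xi(X,Y)=-\xi([X,Y])$), and $(e_i)$ is the dual basis. The structure is nearly parak\''ahler if $(\nabla_XK)X=0$ for all $X$, where $\nabla$ is the Levi-Civita connection of $g$. The condition $\tau_1\neq0$ means that the $\Lambda^3V^*$-component of the intrinsic torsion is nonzero, equivalently $(dF)^{3,0}\neq0$, where $(dF)^{3,0}$ is the component of $dF$ in $\Lambda^3\mathrm{span}(e^1,\dots,e^4)$. *)

(* Defs.v *)
From HB Require Import structures.
From mathcomp Require Import all_boot all_order all_algebra.
From mathcomp Require Import reals.
Set Implicit Arguments. Unset Strict Implicit. Unset Printing Implicit Defensive.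
Import Order.TTheory GRing.Theory Num.Theory.
Local Open Scope ring_scope.

Section Defs.
Variable R : realType.

(* Elements of g are row vectors of coordinates in the basis e_1..e_8
   (index 0..7 in Rocq = 1..8 in the paper). *)
Notation vec := 'rV[R]_8.

(* A 2-form w on g is stored as its (antisymmetric) matrix: w(X,Y) = X w Y^T. *)
Definition ev2 (w : 'M[R]_8) (X Y : vec) : R := (X *m w *m Y^T) 0 0.

(* e^{ij} = e^i /\ e^j (1-based indices), with (a/\b)(X,Y) = a(X)b(Y)-a(Y)b(X). *)
Definition ee (i j : nat) : 'M[R]_8 :=
  delta_mx (@inord 7 i.-1) (@inord 7 j.-1) - delta_mx (@inord 7 j.-1) (@inord 7 i.-1).

Definition tuple8 (l : seq 'M[R]_8) : 'I_8 -> 'M[R]_8 := fun k => nth 0 l k.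

(* Bracket determined by de^k = sigma_k and d xi(X,Y) = - xi([X,Y]):
   the k-th coordinate of [X,Y] is - sigma_k(X,Y). *)
Definition lie (s : 'I_8 -> 'M[R]_8) (X Y : vec) : vec :=
  \row_k (- ev2 (s k) X Y).

Definition is_lie_algebra (s : 'I_8 -> 'M[R]_8) : Prop :=
  (forall X Y, lie s X Y = - lie s Y X) /\
  (forall X Y Z, lie s (lie s X Y) Z + lie s (lie s Y Z) X + lie s (lie s Z X) Y = 0).

Definition lie_isomorphic (s1 s2 : 'I_8 -> 'M[R]_8) : Prop :=
  exists P : 'M[R]_8, P \in unitmx /\
    forall X Y, lie s2 (X *m P) (Y *m P) = lie s1 X Y *m P.

Definition swap4 (i : 'I_8) : 'I_8 := inord ((i + 4) %% 8).
(* g = sum_i (e^i (x) e^{4+i} + e^{4+i} (x) e^i) *)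
Definition gmx : 'M[R]_8 := \matrix_(i, j) (j == swap4 i)%:R.
Definition gmet (X Y : vec) : R := ev2 gmx X Y.
Definition Fform : 'M[R]_8 := \sum_(i < 4) ee i.+1 (i + 5)%N.
(* K = id_V - id_H, V = span(e_1..e_4), H = span(e_5..e_8); acts by X |-> X *m Kmx *)
Definition Kmx : 'M[R]_8 := \matrix_(i, j) (if i == j then (if (i < 4)%N then 1 else -1) else 0).
Definition projV : 'M[R]_8 := \matrix_(i, j) (if i == j then (if (i < 4)%N then 1 else 0) else 0).

(* Levi-Civita connection of gmet on left-invariant fields, by the Koszul
   formula 2 g(nabla_X Y, Z) = g([X,Y],Z) - g([Y,Z],X) + g([Z,X],Y). *)
Definition koszul s (X Y Z : vec) : R :=
  (gmet (lie s X Y) Z - gmet (lie s Y Z) X + gmet (lie s Z X) Y) / 2.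
Definition nabla s (X Y : vec) : vec :=
  (\row_j koszul s X Y (delta_mx 0 j)) *m invmx gmx.

Definition nablaK s (X Y : vec) : vec := nabla s X (Y *m Kmx) - nabla s X Y *m Kmx.
Definition nearly_parakahler s : Prop := forall X : vec, nablaK s X X = 0.

Definition curv s (X Y Z : vec) : vec :=
  nabla s X (nabla s Y Z) - nabla s Y (nabla s X Z) - nabla s (lie s X Y) Z.
Definition flat s : Prop := forall X Y Z, curv s X Y Z = 0.
Definition ricci s (X Y : vec) : R :=
  \tr (\matrix_(i, j) (curv s (delta_mx 0 i) X Y) 0 j).
Definition ricci_flat s : Prop := forall X Y, ricci s X Y = 0.

Definition d2 s (w : 'M[R]_8) (X Y Z : vec) : R :=
  - ev2 w (lie s X Y) Z + ev2 w (lie s X Z) Y - ev2 w (lie s Y Z) X.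
(* (dF)^{3,0}: the component of dF in Lambda^3 span(e^1..e^4) *)
Definition dF30 s (X Y Z : vec) : R := d2 s Fform (X *m projV) (Y *m projV) (Z *m projV).
Definition tau1_nonzero s : Prop := exists X Y Z, dF30 s X Y Z != 0.

Definition conclusion (s h : 'I_8 -> 'M[R]_8) : Prop :=
  is_lie_algebra s /\ lie_isomorphic s h /\ nearly_parakahler s /\
  tau1_nonzero s /\ ricci_flat s /\ ~ flat s.

Definition hplusR (l : seq 'M[R]_8) : 'I_8 -> 'M[R]_8 := tuple8 (l ++ [:: 0]).

Definition h_i : 'I_8 -> 'M[R]_8 := hplusR
  [:: 0; 0; 0; ee 1 2; ee 2 3 + ee 1 4; ee 2 4; ee 1 5 - ee 3 4].
Definition h_ii : 'I_8 -> 'M[R]_8 := hplusR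
  [:: 0; 0; 0; ee 1 2; ee 2 3 + ee 1 4; ee 2 4 + ee 1 3; - ee 3 4 + ee 1 5].
Definition h_iii : 'I_8 -> 'M[R]_8 := hplusR
  [:: 0; 0; ee 1 2; 0; ee 2 4 + ee 1 3; ee 2 3; ee 3 4 + ee 1 5 + ee 2 6].
Definition h_iv : 'I_8 -> 'M[R]_8 := hplusR
  [:: 0; 0; 0; ee 1 2; ee 2 3 + ee 1 4; - ee 2 4 + ee 1 3; - ee 3 4 + ee 1 5].
Definition h_v : 'I_8 -> 'M[R]_8 := hplusR
  [:: 0; 0; ee 1 2; 0; ee 1 3 + ee 2 4; ee 2 3; - ee 2 6 + ee 1 5 + ee 3 4].

Definition g_i (l m : R) : 'I_8 -> 'M[R]_8 := tuple8
  [:: 0; 0; - (l *: ee 1 8); 0; - (m *: ee 2 3) + l *: ee 7 8; m *: ee 1 3;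
      - (m *: ee 1 2) + (l * m) *: ee 3 8; 0].
Definition g_ii (l m : R) : 'I_8 -> 'M[R]_8 := tuple8
  [:: 0; 0; - (l *: ee 1 8); 0; l *: ee 7 8 - m *: ee 2 3;
      - ((l * m) *: ee 2 8) + m *: ee 1 3; (l * m) *: ee 3 8 - m *: ee 1 2; 0].
Definition g_iii (l m k : R) : 'I_8 -> 'M[R]_8 := tuple8
  [:: 0; - (l *: ee 1 8); 0; 0;
      m *: ee 2 3 + ee 1 7 + l *: ee 6 8 - (k * l) *: ee 1 8;
      - (m *: ee 1 3) + (l * m) *: ee 2 8; m *: ee 1 2; 0].
Definition g_iv (l m : R) : 'I_8 -> 'M[R]_8 := tuple8
  [:: 0; 0; - (l *: ee 1 8); 0; - (m *: ee 2 3) + l *: ee 7 8;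
      m *: ee 1 3 + (l * m) *: ee 2 8; - (m *: ee 1 2) + (l * m) *: ee 3 8; 0].
Definition g_v (l m k : R) : 'I_8 -> 'M[R]_8 := tuple8
  [:: 0; - (l *: ee 1 8); 0; 0;
      - ee 1 7 + m *: ee 2 3 + l *: ee 6 8 + (k * l) *: ee 1 8;
      (l * m) *: ee 2 8 - m *: ee 1 3; m *: ee 1 2; 0].

End Defs.

(* Main.v *)
Require Import Defs.
From HB Require Import structures.
From mathcomp Require Import all_boot all_order all_algebra.
From mathcomp Require Import reals.
From mathcomp Require Import ring.
Set Implicit Arguments. Unset Strict Implicit. Unset Printing Implicit Defensive.
Import Order.TTheory GRing.Theory Num.Theory.
Local Open Scope ring_scope.

Section Gen.
Variable R : realType.
Notation vec := 'rV[R]_8.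

Definition row8 (a0 a1 a2 a3 a4 a5 a6 a7 : R) : vec :=
  \row_k nth 0 [:: a0; a1; a2; a3; a4; a5; a6; a7] k.

Lemma ord8_all (P : 'I_8 -> Prop) :
  P (inord 0) -> P (inord 1) -> P (inord 2) -> P (inord 3) ->
  P (inord 4) -> P (inord 5) -> P (inord 6) -> P (inord 7) -> forall k, P k.
Proof.
move=> H0 H1 H2 H3 H4 H5 H6 H7 k.
have -> : k = inord k by apply/val_inj; rewrite /= inordK.
case: k => [[|[|[|[|[|[|[|[|n]]]]]]]] Hk] //=.
Qed.

Lemma row8E a0 a1 a2 a3 a4 a5 a6 a7 n : (n < 8)%N ->
  (row8 a0 a1 a2 a3 a4 a5 a6 a7) 0 (inord n) = nth 0 [:: a0; a1; a2; a3; a4; a5; a6; a7] n.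
Proof. by move=> Hn; rewrite mxE inordK. Qed.

Lemma vec8E (X : vec) : X = row8 (X 0 (inord 0)) (X 0 (inord 1)) (X 0 (inord 2)) (X 0 (inord 3))
   (X 0 (inord 4)) (X 0 (inord 5)) (X 0 (inord 6)) (X 0 (inord 7)).
Proof.
apply/rowP; apply: ord8_all; by rewrite row8E // ?mxE ?ord1.
Qed.

Lemma sum8 (F : 'I_8 -> R) : \sum_(i < 8) F i =
  F (inord 0) + F (inord 1) + F (inord 2) + F (inord 3) + F (inord 4) + F (inord 5) + F (inord 6) + F (inord 7).
Proof.
rewrite !big_ord_recl big_ord0 addr0 !addrA.
by repeat congr (_ + _); congr F; apply/val_inj; rewrite /= inordK.
Qed.


Definition r8 a0 a1 a2 a3 a4 a5 a6 a7 := [:: a0; a1; a2; a3; a4; a5; a6; a7] : seq R.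

Lemma row8D a0 a1 a2 a3 a4 a5 a6 a7 b0 b1 b2 b3 b4 b5 b6 b7 :
  row8 a0 a1 a2 a3 a4 a5 a6 a7 + row8 b0 b1 b2 b3 b4 b5 b6 b7 =
  row8 (a0+b0) (a1+b1) (a2+b2) (a3+b3) (a4+b4) (a5+b5) (a6+b6) (a7+b7).
Proof. apply/rowP; apply: ord8_all; by rewrite /row8 !mxE !inordK. Qed.
Lemma row8N a0 a1 a2 a3 a4 a5 a6 a7 :
  - row8 a0 a1 a2 a3 a4 a5 a6 a7 = row8 (-a0) (-a1) (-a2) (-a3) (-a4) (-a5) (-a6) (-a7).
Proof. apply/rowP; apply: ord8_all; by rewrite /row8 !mxE !inordK. Qed.
Lemma row8B a0 a1 a2 a3 a4 a5 a6 a7 b0 b1 b2 b3 b4 b5 b6 b7 :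
  row8 a0 a1 a2 a3 a4 a5 a6 a7 - row8 b0 b1 b2 b3 b4 b5 b6 b7 =
  row8 (a0-b0) (a1-b1) (a2-b2) (a3-b3) (a4-b4) (a5-b5) (a6-b6) (a7-b7).
Proof. by rewrite row8N row8D. Qed.
Lemma row80 : (0 : vec) = row8 0 0 0 0 0 0 0 0.
Proof. apply/rowP; apply: ord8_all; by rewrite /row8 !mxE !inordK. Qed.

Lemma ev2D (w1 w2 : 'M[R]_8) (X Y : vec) : ev2 (w1 + w2) X Y = ev2 w1 X Y + ev2 w2 X Y.
Proof. by rewrite /ev2 mulmxDr mulmxDl mxE. Qed.
Lemma ev2N (w : 'M[R]_8) (X Y : vec) : ev2 (- w) X Y = - ev2 w X Y.
Proof. by rewrite /ev2 mulmxN mulNmx mxE. Qed.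
Lemma ev2B (w1 w2 : 'M[R]_8) (X Y : vec) : ev2 (w1 - w2) X Y = ev2 w1 X Y - ev2 w2 X Y.
Proof. by rewrite ev2D ev2N. Qed.
Lemma ev2Z a (w : 'M[R]_8) (X Y : vec) : ev2 (a *: w) X Y = a * ev2 w X Y.
Proof. by rewrite /ev2 -scalemxAr -scalemxAl mxE. Qed.
Lemma ev20 (X Y : vec) : ev2 (0 : 'M[R]_8) X Y = 0.
Proof. by rewrite /ev2 mulmx0 mul0mx mxE. Qed.

Lemma ev2_delta (i j : 'I_8) (X Y : vec) : ev2 (delta_mx i j) X Y = X 0 i * Y 0 j.
Proof.
rewrite /ev2 mxE (bigD1 j) //= big1 ?addr0.
  rewrite !mxE (bigD1 i) //= big1 ?addr0.
    by rewrite !mxE !eqxx /= mulr1.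
  by move=> l Hl; rewrite !mxE (negbTE Hl) /= mulr0.
move=> k Hk; rewrite !mxE big1 ?mul0r // => l _.
by rewrite !mxE (negbTE Hk) andbF mulr0.
Qed.

Lemma ev2_ee p q (X Y : vec) : ev2 (@ee R p q) X Y =
  X 0 (inord p.-1) * Y 0 (inord q.-1) - X 0 (inord q.-1) * Y 0 (inord p.-1).
Proof. by rewrite /ee ev2B !ev2_delta. Qed.


Lemma inord_eqE n m : (n < 8)%N -> (m < 8)%N -> ((@inord 7 n) == inord m) = (n == m).
Proof. by move=> Hn Hm; rewrite -val_eqE /= !inordK. Qed.

Lemma mul_gmx a0 a1 a2 a3 a4 a5 a6 a7 :
  row8 a0 a1 a2 a3 a4 a5 a6 a7 *m gmx R = row8 a4 a5 a6 a7 a0 a1 a2 a3.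
Proof.
apply/rowP; apply: ord8_all; rewrite row8E // mxE sum8 /gmx !mxE /swap4 !inordK //= !inord_eqE //=;
  ring.
Qed.

Lemma gmx2 : gmx R *m gmx R = 1%:M.
Proof.
apply/matrixP; apply: ord8_all; apply: ord8_all;
rewrite mxE sum8 /gmx !mxE /swap4 !inordK //= !inord_eqE //=; ring.
Qed.

Lemma invmx_gmx : invmx (gmx R) = gmx R.
Proof.
have [U _] := mulmx1_unit gmx2.
by rewrite -[invmx _]mulmx1 -gmx2 mulmxA mulVmx // mul1mx.
Qed.

Lemma mul_Kmx a0 a1 a2 a3 a4 a5 a6 a7 :
  row8 a0 a1 a2 a3 a4 a5 a6 a7 *m Kmx R = row8 a0 a1 a2 a3 (-a4) (-a5) (-a6) (-a7).
Proof.
apply/rowP; apply: ord8_all; rewrite row8E // mxE sum8 /Kmx !mxE !inordK //= !inord_eqE //=;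
  ring.
Qed.

Lemma mul_projV a0 a1 a2 a3 a4 a5 a6 a7 :
  row8 a0 a1 a2 a3 a4 a5 a6 a7 *m projV R = row8 a0 a1 a2 a3 0 0 0 0.
Proof.
apply/rowP; apply: ord8_all; rewrite row8E // mxE sum8 /projV !mxE !inordK //= !inord_eqE //=;
  ring.
Qed.

Lemma gmetE a0 a1 a2 a3 a4 a5 a6 a7 b0 b1 b2 b3 b4 b5 b6 b7 :
  gmet (row8 a0 a1 a2 a3 a4 a5 a6 a7) (row8 b0 b1 b2 b3 b4 b5 b6 b7) =
  a0*b4 + a1*b5 + a2*b6 + a3*b7 + a4*b0 + a5*b1 + a6*b2 + a7*b3.
Proof.
rewrite /gmet /ev2 mul_gmx mxE sum8 !mxE !inordK //=; ring.
Qed.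

Lemma delta8 n : (n < 8)%N -> delta_mx 0 (@inord 7 n) =
  row8 (n == 0)%:R (n == 1)%:R (n == 2)%:R (n == 3)%:R (n == 4)%:R (n == 5)%:R (n == 6)%:R (n == 7)%:R :> vec.
Proof.
move=> Hn; apply/rowP; apply: ord8_all; rewrite /row8 !mxE !inordK //= !inord_eqE //= eq_sym //.
Qed.

Lemma FformE : Fform R = @ee R 1 5 + @ee R 2 6 + @ee R 3 7 + @ee R 4 8.
Proof. by rewrite /Fform !big_ord_recl big_ord0 addr0 /= !addrA. Qed.


Lemma row_fun8 (f : 'I_8 -> R) : \row_j f j =
  row8 (f (inord 0)) (f (inord 1)) (f (inord 2)) (f (inord 3)) (f (inord 4)) (f (inord 5)) (f (inord 6)) (f (inord 7)).
Proof. apply/rowP; apply: ord8_all; by rewrite row8E // mxE. Qed.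

Definition mx8 (rs : seq (seq R)) : 'M[R]_8 := \matrix_(i, j) nth 0 (nth [::] rs i) j.

Definition cs8 (rs : seq (seq R)) x0 x1 x2 x3 x4 x5 x6 x7 j :=
  x0 * nth 0 (nth [::] rs 0) j + x1 * nth 0 (nth [::] rs 1) j + x2 * nth 0 (nth [::] rs 2) j +
  x3 * nth 0 (nth [::] rs 3) j + x4 * nth 0 (nth [::] rs 4) j + x5 * nth 0 (nth [::] rs 5) j +
  x6 * nth 0 (nth [::] rs 6) j + x7 * nth 0 (nth [::] rs 7) j.

Lemma mul_mx8 rs x0 x1 x2 x3 x4 x5 x6 x7 :
  row8 x0 x1 x2 x3 x4 x5 x6 x7 *m mx8 rs =
  row8 (cs8 rs x0 x1 x2 x3 x4 x5 x6 x7 0) (cs8 rs x0 x1 x2 x3 x4 x5 x6 x7 1)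
       (cs8 rs x0 x1 x2 x3 x4 x5 x6 x7 2) (cs8 rs x0 x1 x2 x3 x4 x5 x6 x7 3)
       (cs8 rs x0 x1 x2 x3 x4 x5 x6 x7 4) (cs8 rs x0 x1 x2 x3 x4 x5 x6 x7 5)
       (cs8 rs x0 x1 x2 x3 x4 x5 x6 x7 6) (cs8 rs x0 x1 x2 x3 x4 x5 x6 x7 7).
Proof.
apply/rowP; apply: ord8_all; rewrite row8E // mxE sum8 /mx8 /row8 !mxE !inordK //.
Qed.

Lemma ricciE s (X Y : vec) : ricci s X Y = \sum_(i < 8) (curv s (delta_mx 0 i) X Y) 0 i.
Proof. by rewrite /ricci /mxtrace; apply: eq_bigr => i _; rewrite mxE. Qed.

Lemma delta8_0 : delta_mx 0 (@inord 7 0) = row8 1 0 0 0 0 0 0 0 :> vec.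
Proof. by rewrite delta8. Qed.
Lemma delta8_1 : delta_mx 0 (@inord 7 1) = row8 0 1 0 0 0 0 0 0 :> vec.
Proof. by rewrite delta8. Qed.
Lemma delta8_2 : delta_mx 0 (@inord 7 2) = row8 0 0 1 0 0 0 0 0 :> vec.
Proof. by rewrite delta8. Qed.
Lemma delta8_3 : delta_mx 0 (@inord 7 3) = row8 0 0 0 1 0 0 0 0 :> vec.
Proof. by rewrite delta8. Qed.
Lemma delta8_4 : delta_mx 0 (@inord 7 4) = row8 0 0 0 0 1 0 0 0 :> vec.
Proof. by rewrite delta8. Qed.
Lemma delta8_5 : delta_mx 0 (@inord 7 5) = row8 0 0 0 0 0 1 0 0 :> vec.
Proof. by rewrite delta8. Qed.
Lemma delta8_6 : delta_mx 0 (@inord 7 6) = row8 0 0 0 0 0 0 1 0 :> vec.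
Proof. by rewrite delta8. Qed.
Lemma delta8_7 : delta_mx 0 (@inord 7 7) = row8 0 0 0 0 0 0 0 1 :> vec.
Proof. by rewrite delta8. Qed.

End Gen.

Ltac lie_tac d := apply/rowP; apply: ord8_all; rewrite row8E // mxE /d; try rewrite /hplusR;
  rewrite /tuple8 inordK //= ?ev2D ?ev2B ?ev2N ?ev2Z ?ev20 ?ev2_ee ?ev2_delta /= ?row8E //=; ring.

Ltac nabla_tac L := rewrite /nabla invmx_gmx row_fun8 ?delta8_0 ?delta8_1 ?delta8_2 ?delta8_3 ?delta8_4 ?delta8_5 ?delta8_6 ?delta8_7 mul_gmx /koszul !L !gmetE; f_equal; by field.

Section Cases.
Variable R : realType.
Variables l m k : R.
Hypotheses (hl : l != 0) (hm : m != 0).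
Notation vec := 'rV[R]_8.

Lemma lie_hi x0 x1 x2 x3 x4 x5 x6 x7 y0 y1 y2 y3 y4 y5 y6 y7 : lie (@h_i R) (row8 x0 x1 x2 x3 x4 x5 x6 x7) (row8 y0 y1 y2 y3 y4 y5 y6 y7) = row8 0 0 0 (- x0 * y1 + x1 * y0) (- x0 * y3 - x1 * y2 + x2 * y1 + x3 * y0) (- x1 * y3 + x3 * y1) (- x0 * y4 + x2 * y3 - x3 * y2 + x4 * y0) 0.
Proof. lie_tac h_i. Qed.

Lemma lie_gi x0 x1 x2 x3 x4 x5 x6 x7 y0 y1 y2 y3 y4 y5 y6 y7 : lie (g_i l m) (row8 x0 x1 x2 x3 x4 x5 x6 x7) (row8 y0 y1 y2 y3 y4 y5 y6 y7) = row8 0 0 (l * x0 * y7 - l * x7 * y0) 0 (- l * x6 * y7 + l * x7 * y6 + m * x1 * y2 - m * x2 * y1) (- m * x0 * y2 + m * x2 * y0) (- l * m * x2 * y7 + l * m * x7 * y2 + m * x0 * y1 - m * x1 * y0) 0.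
Proof. lie_tac g_i. Qed.

Lemma nabla_gi x0 x1 x2 x3 x4 x5 x6 x7 y0 y1 y2 y3 y4 y5 y6 y7 : nabla (g_i l m) (row8 x0 x1 x2 x3 x4 x5 x6 x7) (row8 y0 y1 y2 y3 y4 y5 y6 y7) = row8 0 0 (- l * x7 * y0) (l * m * x2 * y2) (l * x7 * y6 + (m * x1 * y2) / 2%:R - (m * x2 * y1) / 2%:R) (- (m * x0 * y2) / 2%:R + (m * x2 * y0) / 2%:R) (- l * m * x2 * y7 + (m * x0 * y1) / 2%:R - (m * x1 * y0) / 2%:R) 0.
Proof. nabla_tac lie_gi. Qed.

Definition Pi : 'M[R]_8 := mx8 [:: [:: 0; (m); 0; 0; 0; 0; 0; 0]; [:: 0; 0; (1%:R); 0; 0; 0; 0; 0]; [:: 0; 0; 0; (m); 0; 0; 0; 0]; [:: 0; 0; 0; 0; 0; 0; 0; (1%:R)]; [:: 0; 0; 0; 0; 0; 0; (1%:R); 0]; [:: 0; 0; 0; 0; 0; (m); 0; 0]; [:: 0; 0; 0; 0; (- 1%:R); 0; 0; 0]; [:: (l); 0; 0; 0; 0; 0; 0; 0]].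


Definition Qi : 'M[R]_8 := mx8 [:: [:: 0; 0; 0; 0; 0; 0; 0; 1 / l]; [:: 1 / m; 0; 0; 0; 0; 0; 0; 0]; [:: 0; 1; 0; 0; 0; 0; 0; 0]; [:: 0; 0; 1 / m; 0; 0; 0; 0; 0]; [:: 0; 0; 0; 0; 0; 0; -1; 0]; [:: 0; 0; 0; 0; 0; 1 / m; 0; 0]; [:: 0; 0; 0; 0; 1; 0; 0; 0]; [:: 0; 0; 0; 1; 0; 0; 0; 0]].

Lemma lieal_i : is_lie_algebra (g_i l m).
Proof.
split.
- move=> X Y; rewrite (vec8E X) (vec8E Y) !lie_gi row8N; f_equal; ring.
- move=> X Y Z; rewrite (vec8E X) (vec8E Y) (vec8E Z) !lie_gi !row8D row80; f_equal; ring.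
Qed.

Lemma PQ_i : Pi *m Qi = 1%:M.
Proof.
apply/row_matrixP; apply: ord8_all; rewrite !rowE mulmxA mulmx1 ?delta8_0 ?delta8_1 ?delta8_2 ?delta8_3 ?delta8_4 ?delta8_5 ?delta8_6 ?delta8_7;
rewrite /Pi /Qi !mul_mx8 /cs8; cbn [nth]; f_equal; (field; rewrite ?mulf_neq0 ?hl ?hm //).
Qed.

Lemma iso_i : lie_isomorphic (g_i l m) (@h_i R).
Proof.
exists Pi; split; first by case: (mulmx1_unit PQ_i).
move=> X Y; rewrite (vec8E X) (vec8E Y) /Pi !mul_mx8 /cs8; cbn [nth].
rewrite lie_hi lie_gi mul_mx8 /cs8; cbn [nth]; f_equal; ring.
Qed.

Lemma npk_i : nearly_parakahler (g_i l m).
Proof.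
move=> X; rewrite (vec8E X) /nablaK mul_Kmx !nabla_gi mul_Kmx row8B row80; f_equal; ring.
Qed.

Lemma tau1_i : tau1_nonzero (g_i l m).
Proof.
exists (row8 1 0 0 0 0 0 0 0), (row8 0 1 0 0 0 0 0 0), (row8 0 0 1 0 0 0 0 0).
have -> : dF30 (g_i l m) (row8 1 0 0 0 0 0 0 0) (row8 0 1 0 0 0 0 0 0) (row8 0 0 1 0 0 0 0 0) = (3%:R * m).
  rewrite /dF30 !mul_projV /d2 !lie_gi FformE !ev2D ?ev2N ?ev2_ee ?ev2_delta !row8E //=; ring.
by rewrite ?oppr_eq0 mulf_neq0 // pnatr_eq0.
Qed.

Lemma ricci_i : ricci_flat (g_i l m).
Proof.
move=> X Y; rewrite (vec8E X) (vec8E Y) ricciE sum8 ?delta8_0 ?delta8_1 ?delta8_2 ?delta8_3 ?delta8_4 ?delta8_5 ?delta8_6 ?delta8_7 /curv.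
do 3 rewrite ?lie_gi ?nabla_gi.
rewrite !row8B !row8E //=; ring.
Qed.

Lemma nflat_i : ~ flat (g_i l m).
Proof.
move=> Hf; have := Hf (row8 1 0 0 0 0 0 0 0) (row8 0 0 0 0 0 0 0 1) (row8 0 0 1 0 0 0 0 0).
rewrite /curv; do 3 rewrite ?lie_gi ?nabla_gi.
rewrite !row8B row80 => /(congr1 (fun v : 'rV[R]_8 => v 0 (inord 3))).
rewrite /= !row8E //= => H.
have : - (l * l * m) = 0 by rewrite -H; ring.
by move/eqP; rewrite oppr_eq0 !mulf_eq0 (negbTE hl) (negbTE hm).
Qed.

Lemma concl_i : conclusion (g_i l m) (@h_i R).
Proof. exact: (conj lieal_i (conj iso_i (conj npk_i (conj tau1_i (conj ricci_i nflat_i))))). Qed.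


Lemma lie_hii x0 x1 x2 x3 x4 x5 x6 x7 y0 y1 y2 y3 y4 y5 y6 y7 : lie (@h_ii R) (row8 x0 x1 x2 x3 x4 x5 x6 x7) (row8 y0 y1 y2 y3 y4 y5 y6 y7) = row8 0 0 0 (- x0 * y1 + x1 * y0) (- x0 * y3 - x1 * y2 + x2 * y1 + x3 * y0) (- x0 * y2 - x1 * y3 + x2 * y0 + x3 * y1) (- x0 * y4 + x2 * y3 - x3 * y2 + x4 * y0) 0.
Proof. lie_tac h_ii. Qed.

Lemma lie_gii x0 x1 x2 x3 x4 x5 x6 x7 y0 y1 y2 y3 y4 y5 y6 y7 : lie (g_ii l m) (row8 x0 x1 x2 x3 x4 x5 x6 x7) (row8 y0 y1 y2 y3 y4 y5 y6 y7) = row8 0 0 (l * x0 * y7 - l * x7 * y0) 0 (- l * x6 * y7 + l * x7 * y6 + m * x1 * y2 - m * x2 * y1) (l * m * x1 * y7 - l * m * x7 * y1 - m * x0 * y2 + m * x2 * y0) (- l * m * x2 * y7 + l * m * x7 * y2 + m * x0 * y1 - m * x1 * y0) 0.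
Proof. lie_tac g_ii. Qed.

Lemma nabla_gii x0 x1 x2 x3 x4 x5 x6 x7 y0 y1 y2 y3 y4 y5 y6 y7 : nabla (g_ii l m) (row8 x0 x1 x2 x3 x4 x5 x6 x7) (row8 y0 y1 y2 y3 y4 y5 y6 y7) = row8 0 0 (- l * x7 * y0) (- l * m * x1 * y1 + l * m * x2 * y2) (l * x7 * y6 + (m * x1 * y2) / 2%:R - (m * x2 * y1) / 2%:R) (l * m * x1 * y7 - (m * x0 * y2) / 2%:R + (m * x2 * y0) / 2%:R) (- l * m * x2 * y7 + (m * x0 * y1) / 2%:R - (m * x1 * y0) / 2%:R) 0.
Proof. nabla_tac lie_gii. Qed.

Definition Pii : 'M[R]_8 := mx8 [:: [:: 0; (m); 0; 0; 0; 0; 0; 0]; [:: 0; 0; (m * m); 0; 0; 0; 0; 0]; [:: 0; 0; 0; (m * m); 0; 0; 0; 0]; [:: 0; 0; 0; 0; 0; 0; 0; (1%:R)]; [:: 0; 0; 0; 0; 0; 0; (m * m * m); 0]; [:: 0; 0; 0; 0; 0; (m * m); 0; 0]; [:: 0; 0; 0; 0; (- m * m); 0; 0; 0]; [:: (l * m); 0; 0; 0; 0; 0; 0; 0]].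


Definition Qii : 'M[R]_8 := mx8 [:: [:: 0; 0; 0; 0; 0; 0; 0; 1 / (l * m)]; [:: 1 / m; 0; 0; 0; 0; 0; 0; 0]; [:: 0; 1 / (m * m); 0; 0; 0; 0; 0; 0]; [:: 0; 0; 1 / (m * m); 0; 0; 0; 0; 0]; [:: 0; 0; 0; 0; 0; 0; -1 / (m * m); 0]; [:: 0; 0; 0; 0; 0; 1 / (m * m); 0; 0]; [:: 0; 0; 0; 0; 1 / (m * m * m); 0; 0; 0]; [:: 0; 0; 0; 1; 0; 0; 0; 0]].

Lemma lieal_ii : is_lie_algebra (g_ii l m).
Proof.
split.
- move=> X Y; rewrite (vec8E X) (vec8E Y) !lie_gii row8N; f_equal; ring.
- move=> X Y Z; rewrite (vec8E X) (vec8E Y) (vec8E Z) !lie_gii !row8D row80; f_equal; ring.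
Qed.

Lemma PQ_ii : Pii *m Qii = 1%:M.
Proof.
apply/row_matrixP; apply: ord8_all; rewrite !rowE mulmxA mulmx1 ?delta8_0 ?delta8_1 ?delta8_2 ?delta8_3 ?delta8_4 ?delta8_5 ?delta8_6 ?delta8_7;
rewrite /Pii /Qii !mul_mx8 /cs8; cbn [nth]; f_equal; (field; rewrite ?mulf_neq0 ?hl ?hm //).
Qed.

Lemma iso_ii : lie_isomorphic (g_ii l m) (@h_ii R).
Proof.
exists Pii; split; first by case: (mulmx1_unit PQ_ii).
move=> X Y; rewrite (vec8E X) (vec8E Y) /Pii !mul_mx8 /cs8; cbn [nth].
rewrite lie_hii lie_gii mul_mx8 /cs8; cbn [nth]; f_equal; ring.
Qed.

Lemma npk_ii : nearly_parakahler (g_ii l m).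
Proof.
move=> X; rewrite (vec8E X) /nablaK mul_Kmx !nabla_gii mul_Kmx row8B row80; f_equal; ring.
Qed.

Lemma tau1_ii : tau1_nonzero (g_ii l m).
Proof.
exists (row8 1 0 0 0 0 0 0 0), (row8 0 1 0 0 0 0 0 0), (row8 0 0 1 0 0 0 0 0).
have -> : dF30 (g_ii l m) (row8 1 0 0 0 0 0 0 0) (row8 0 1 0 0 0 0 0 0) (row8 0 0 1 0 0 0 0 0) = (3%:R * m).
  rewrite /dF30 !mul_projV /d2 !lie_gii FformE !ev2D ?ev2N ?ev2_ee ?ev2_delta !row8E //=; ring.
by rewrite ?oppr_eq0 mulf_neq0 // pnatr_eq0.
Qed.

Lemma ricci_ii : ricci_flat (g_ii l m).
Proof.
move=> X Y; rewrite (vec8E X) (vec8E Y) ricciE sum8 ?delta8_0 ?delta8_1 ?delta8_2 ?delta8_3 ?delta8_4 ?delta8_5 ?delta8_6 ?delta8_7 /curv.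
do 3 rewrite ?lie_gii ?nabla_gii.
rewrite !row8B !row8E //=; ring.
Qed.

Lemma nflat_ii : ~ flat (g_ii l m).
Proof.
move=> Hf; have := Hf (row8 1 0 0 0 0 0 0 0) (row8 0 0 0 0 0 0 0 1) (row8 0 0 1 0 0 0 0 0).
rewrite /curv; do 3 rewrite ?lie_gii ?nabla_gii.
rewrite !row8B row80 => /(congr1 (fun v : 'rV[R]_8 => v 0 (inord 3))).
rewrite /= !row8E //= => H.
have : - (l * l * m) = 0 by rewrite -H; ring.
by move/eqP; rewrite oppr_eq0 !mulf_eq0 (negbTE hl) (negbTE hm).
Qed.

Lemma concl_ii : conclusion (g_ii l m) (@h_ii R).
Proof. exact: (conj lieal_ii (conj iso_ii (conj npk_ii (conj tau1_ii (conj ricci_ii nflat_ii))))). Qed.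


Lemma lie_hiii x0 x1 x2 x3 x4 x5 x6 x7 y0 y1 y2 y3 y4 y5 y6 y7 : lie (@h_iii R) (row8 x0 x1 x2 x3 x4 x5 x6 x7) (row8 y0 y1 y2 y3 y4 y5 y6 y7) = row8 0 0 (- x0 * y1 + x1 * y0) 0 (- x0 * y2 - x1 * y3 + x2 * y0 + x3 * y1) (- x1 * y2 + x2 * y1) (- x0 * y4 - x1 * y5 - x2 * y3 + x3 * y2 + x4 * y0 + x5 * y1) 0.
Proof. lie_tac h_iii. Qed.

Lemma lie_giii x0 x1 x2 x3 x4 x5 x6 x7 y0 y1 y2 y3 y4 y5 y6 y7 : lie (g_iii l m k) (row8 x0 x1 x2 x3 x4 x5 x6 x7) (row8 y0 y1 y2 y3 y4 y5 y6 y7) = row8 0 (l * x0 * y7 - l * x7 * y0) 0 0 (k * l * x0 * y7 - k * l * x7 * y0 - l * x5 * y7 + l * x7 * y5 - m * x1 * y2 + m * x2 * y1 - x0 * y6 + x6 * y0) (- l * m * x1 * y7 + l * m * x7 * y1 + m * x0 * y2 - m * x2 * y0) (- m * x0 * y1 + m * x1 * y0) 0.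
Proof. lie_tac g_iii. Qed.

Lemma nabla_giii x0 x1 x2 x3 x4 x5 x6 x7 y0 y1 y2 y3 y4 y5 y6 y7 : nabla (g_iii l m k) (row8 x0 x1 x2 x3 x4 x5 x6 x7) (row8 y0 y1 y2 y3 y4 y5 y6 y7) = row8 0 (- l * x7 * y0) (x0 * y0) (- k * l * x0 * y0 + l * m * x1 * y1) (k * l * x0 * y7 + l * x7 * y5 - (m * x1 * y2) / 2%:R + (m * x2 * y1) / 2%:R - x0 * y6) (- l * m * x1 * y7 + (m * x0 * y2) / 2%:R - (m * x2 * y0) / 2%:R) (- (m * x0 * y1) / 2%:R + (m * x1 * y0) / 2%:R) 0.
Proof. nabla_tac lie_giii. Qed.

Definition Piii : 'M[R]_8 := mx8 [:: [:: 0; (m); 0; 0; 0; 0; 0; 0]; [:: 0; 0; (m * m); 0; 0; 0; (- k * m * m * m); 0]; [:: 0; 0; 0; (m * m); 0; 0; 0; 0]; [:: 0; 0; 0; 0; 0; 0; 0; (1%:R)]; [:: 0; 0; 0; 0; 0; 0; (m * m * m); 0]; [:: 0; 0; 0; 0; (- m * m); 0; 0; 0]; [:: 0; 0; 0; 0; 0; (m * m); 0; 0]; [:: (l * m); 0; 0; 0; 0; 0; 0; 0]].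


Definition Qiii : 'M[R]_8 := mx8 [:: [:: 0; 0; 0; 0; 0; 0; 0; 1 / (l * m)]; [:: 1 / m; 0; 0; 0; 0; 0; 0; 0]; [:: 0; 1 / (m * m); 0; 0; k / (m * m); 0; 0; 0]; [:: 0; 0; 1 / (m * m); 0; 0; 0; 0; 0]; [:: 0; 0; 0; 0; 0; -1 / (m * m); 0; 0]; [:: 0; 0; 0; 0; 0; 0; 1 / (m * m); 0]; [:: 0; 0; 0; 0; 1 / (m * m * m); 0; 0; 0]; [:: 0; 0; 0; 1; 0; 0; 0; 0]].

Lemma lieal_iii : is_lie_algebra (g_iii l m k).
Proof.
split.
- move=> X Y; rewrite (vec8E X) (vec8E Y) !lie_giii row8N; f_equal; ring.
- move=> X Y Z; rewrite (vec8E X) (vec8E Y) (vec8E Z) !lie_giii !row8D row80; f_equal; ring.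
Qed.

Lemma PQ_iii : Piii *m Qiii = 1%:M.
Proof.
apply/row_matrixP; apply: ord8_all; rewrite !rowE mulmxA mulmx1 ?delta8_0 ?delta8_1 ?delta8_2 ?delta8_3 ?delta8_4 ?delta8_5 ?delta8_6 ?delta8_7;
rewrite /Piii /Qiii !mul_mx8 /cs8; cbn [nth]; f_equal; (field; rewrite ?mulf_neq0 ?hl ?hm //).
Qed.

Lemma iso_iii : lie_isomorphic (g_iii l m k) (@h_iii R).
Proof.
exists Piii; split; first by case: (mulmx1_unit PQ_iii).
move=> X Y; rewrite (vec8E X) (vec8E Y) /Piii !mul_mx8 /cs8; cbn [nth].
rewrite lie_hiii lie_giii mul_mx8 /cs8; cbn [nth]; f_equal; ring.
Qed.

Lemma npk_iii : nearly_parakahler (g_iii l m k).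
Proof.
move=> X; rewrite (vec8E X) /nablaK mul_Kmx !nabla_giii mul_Kmx row8B row80; f_equal; ring.
Qed.

Lemma tau1_iii : tau1_nonzero (g_iii l m k).
Proof.
exists (row8 1 0 0 0 0 0 0 0), (row8 0 1 0 0 0 0 0 0), (row8 0 0 1 0 0 0 0 0).
have -> : dF30 (g_iii l m k) (row8 1 0 0 0 0 0 0 0) (row8 0 1 0 0 0 0 0 0) (row8 0 0 1 0 0 0 0 0) = - (3%:R * m).
  rewrite /dF30 !mul_projV /d2 !lie_giii FformE !ev2D ?ev2N ?ev2_ee ?ev2_delta !row8E //=; ring.
by rewrite ?oppr_eq0 mulf_neq0 // pnatr_eq0.
Qed.

Lemma ricci_iii : ricci_flat (g_iii l m k).
Proof.
move=> X Y; rewrite (vec8E X) (vec8E Y) ricciE sum8 ?delta8_0 ?delta8_1 ?delta8_2 ?delta8_3 ?delta8_4 ?delta8_5 ?delta8_6 ?delta8_7 /curv.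
do 3 rewrite ?lie_giii ?nabla_giii.
rewrite !row8B !row8E //=; ring.
Qed.

Lemma nflat_iii : ~ flat (g_iii l m k).
Proof.
move=> Hf; have := Hf (row8 1 0 0 0 0 0 0 0) (row8 0 0 0 0 0 0 0 1) (row8 0 1 0 0 0 0 0 0).
rewrite /curv; do 3 rewrite ?lie_giii ?nabla_giii.
rewrite !row8B row80 => /(congr1 (fun v : 'rV[R]_8 => v 0 (inord 3))).
rewrite /= !row8E //= => H.
have : - (l * l * m) = 0 by rewrite -H; ring.
by move/eqP; rewrite oppr_eq0 !mulf_eq0 (negbTE hl) (negbTE hm).
Qed.

Lemma concl_iii : conclusion (g_iii l m k) (@h_iii R).
Proof. exact: (conj lieal_iii (conj iso_iii (conj npk_iii (conj tau1_iii (conj ricci_iii nflat_iii))))). Qed.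


Lemma lie_hiv x0 x1 x2 x3 x4 x5 x6 x7 y0 y1 y2 y3 y4 y5 y6 y7 : lie (@h_iv R) (row8 x0 x1 x2 x3 x4 x5 x6 x7) (row8 y0 y1 y2 y3 y4 y5 y6 y7) = row8 0 0 0 (- x0 * y1 + x1 * y0) (- x0 * y3 - x1 * y2 + x2 * y1 + x3 * y0) (- x0 * y2 + x1 * y3 + x2 * y0 - x3 * y1) (- x0 * y4 + x2 * y3 - x3 * y2 + x4 * y0) 0.
Proof. lie_tac h_iv. Qed.

Lemma lie_giv x0 x1 x2 x3 x4 x5 x6 x7 y0 y1 y2 y3 y4 y5 y6 y7 : lie (g_iv l m) (row8 x0 x1 x2 x3 x4 x5 x6 x7) (row8 y0 y1 y2 y3 y4 y5 y6 y7) = row8 0 0 (l * x0 * y7 - l * x7 * y0) 0 (- l * x6 * y7 + l * x7 * y6 + m * x1 * y2 - m * x2 * y1) (- l * m * x1 * y7 + l * m * x7 * y1 - m * x0 * y2 + m * x2 * y0) (- l * m * x2 * y7 + l * m * x7 * y2 + m * x0 * y1 - m * x1 * y0) 0.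
Proof. lie_tac g_iv. Qed.

Lemma nabla_giv x0 x1 x2 x3 x4 x5 x6 x7 y0 y1 y2 y3 y4 y5 y6 y7 : nabla (g_iv l m) (row8 x0 x1 x2 x3 x4 x5 x6 x7) (row8 y0 y1 y2 y3 y4 y5 y6 y7) = row8 0 0 (- l * x7 * y0) (l * m * x1 * y1 + l * m * x2 * y2) (l * x7 * y6 + (m * x1 * y2) / 2%:R - (m * x2 * y1) / 2%:R) (- l * m * x1 * y7 - (m * x0 * y2) / 2%:R + (m * x2 * y0) / 2%:R) (- l * m * x2 * y7 + (m * x0 * y1) / 2%:R - (m * x1 * y0) / 2%:R) 0.
Proof. nabla_tac lie_giv. Qed.

Definition Piv : 'M[R]_8 := mx8 [:: [:: 0; (m); 0; 0; 0; 0; 0; 0]; [:: 0; 0; (m * m); 0; 0; 0; 0; 0]; [:: 0; 0; 0; (m * m); 0; 0; 0; 0]; [:: 0; 0; 0; 0; 0; 0; 0; (1%:R)]; [:: 0; 0; 0; 0; 0; 0; (m * m * m); 0]; [:: 0; 0; 0; 0; 0; (- m * m); 0; 0]; [:: 0; 0; 0; 0; (- m * m); 0; 0; 0]; [:: (l * m); 0; 0; 0; 0; 0; 0; 0]].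


Definition Qiv : 'M[R]_8 := mx8 [:: [:: 0; 0; 0; 0; 0; 0; 0; 1 / (l * m)]; [:: 1 / m; 0; 0; 0; 0; 0; 0; 0]; [:: 0; 1 / (m * m); 0; 0; 0; 0; 0; 0]; [:: 0; 0; 1 / (m * m); 0; 0; 0; 0; 0]; [:: 0; 0; 0; 0; 0; 0; -1 / (m * m); 0]; [:: 0; 0; 0; 0; 0; -1 / (m * m); 0; 0]; [:: 0; 0; 0; 0; 1 / (m * m * m); 0; 0; 0]; [:: 0; 0; 0; 1; 0; 0; 0; 0]].

Lemma lieal_iv : is_lie_algebra (g_iv l m).
Proof.
split.
- move=> X Y; rewrite (vec8E X) (vec8E Y) !lie_giv row8N; f_equal; ring.
- move=> X Y Z; rewrite (vec8E X) (vec8E Y) (vec8E Z) !lie_giv !row8D row80; f_equal; ring.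
Qed.

Lemma PQ_iv : Piv *m Qiv = 1%:M.
Proof.
apply/row_matrixP; apply: ord8_all; rewrite !rowE mulmxA mulmx1 ?delta8_0 ?delta8_1 ?delta8_2 ?delta8_3 ?delta8_4 ?delta8_5 ?delta8_6 ?delta8_7;
rewrite /Piv /Qiv !mul_mx8 /cs8; cbn [nth]; f_equal; (field; rewrite ?mulf_neq0 ?hl ?hm //).
Qed.

Lemma iso_iv : lie_isomorphic (g_iv l m) (@h_iv R).
Proof.
exists Piv; split; first by case: (mulmx1_unit PQ_iv).
move=> X Y; rewrite (vec8E X) (vec8E Y) /Piv !mul_mx8 /cs8; cbn [nth].
rewrite lie_hiv lie_giv mul_mx8 /cs8; cbn [nth]; f_equal; ring.
Qed.

Lemma npk_iv : nearly_parakahler (g_iv l m).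
Proof.
move=> X; rewrite (vec8E X) /nablaK mul_Kmx !nabla_giv mul_Kmx row8B row80; f_equal; ring.
Qed.

Lemma tau1_iv : tau1_nonzero (g_iv l m).
Proof.
exists (row8 1 0 0 0 0 0 0 0), (row8 0 1 0 0 0 0 0 0), (row8 0 0 1 0 0 0 0 0).
have -> : dF30 (g_iv l m) (row8 1 0 0 0 0 0 0 0) (row8 0 1 0 0 0 0 0 0) (row8 0 0 1 0 0 0 0 0) = (3%:R * m).
  rewrite /dF30 !mul_projV /d2 !lie_giv FformE !ev2D ?ev2N ?ev2_ee ?ev2_delta !row8E //=; ring.
by rewrite ?oppr_eq0 mulf_neq0 // pnatr_eq0.
Qed.

Lemma ricci_iv : ricci_flat (g_iv l m).
Proof.
move=> X Y; rewrite (vec8E X) (vec8E Y) ricciE sum8 ?delta8_0 ?delta8_1 ?delta8_2 ?delta8_3 ?delta8_4 ?delta8_5 ?delta8_6 ?delta8_7 /curv.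
do 3 rewrite ?lie_giv ?nabla_giv.
rewrite !row8B !row8E //=; ring.
Qed.

Lemma nflat_iv : ~ flat (g_iv l m).
Proof.
move=> Hf; have := Hf (row8 1 0 0 0 0 0 0 0) (row8 0 0 0 0 0 0 0 1) (row8 0 0 1 0 0 0 0 0).
rewrite /curv; do 3 rewrite ?lie_giv ?nabla_giv.
rewrite !row8B row80 => /(congr1 (fun v : 'rV[R]_8 => v 0 (inord 3))).
rewrite /= !row8E //= => H.
have : - (l * l * m) = 0 by rewrite -H; ring.
by move/eqP; rewrite oppr_eq0 !mulf_eq0 (negbTE hl) (negbTE hm).
Qed.

Lemma concl_iv : conclusion (g_iv l m) (@h_iv R).
Proof. exact: (conj lieal_iv (conj iso_iv (conj npk_iv (conj tau1_iv (conj ricci_iv nflat_iv))))). Qed.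


Lemma lie_hv x0 x1 x2 x3 x4 x5 x6 x7 y0 y1 y2 y3 y4 y5 y6 y7 : lie (@h_v R) (row8 x0 x1 x2 x3 x4 x5 x6 x7) (row8 y0 y1 y2 y3 y4 y5 y6 y7) = row8 0 0 (- x0 * y1 + x1 * y0) 0 (- x0 * y2 - x1 * y3 + x2 * y0 + x3 * y1) (- x1 * y2 + x2 * y1) (- x0 * y4 + x1 * y5 - x2 * y3 + x3 * y2 + x4 * y0 - x5 * y1) 0.
Proof. lie_tac h_v. Qed.

Lemma lie_gv x0 x1 x2 x3 x4 x5 x6 x7 y0 y1 y2 y3 y4 y5 y6 y7 : lie (g_v l m k) (row8 x0 x1 x2 x3 x4 x5 x6 x7) (row8 y0 y1 y2 y3 y4 y5 y6 y7) = row8 0 (l * x0 * y7 - l * x7 * y0) 0 0 (- k * l * x0 * y7 + k * l * x7 * y0 - l * x5 * y7 + l * x7 * y5 - m * x1 * y2 + m * x2 * y1 + x0 * y6 - x6 * y0) (- l * m * x1 * y7 + l * m * x7 * y1 + m * x0 * y2 - m * x2 * y0) (- m * x0 * y1 + m * x1 * y0) 0.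
Proof. lie_tac g_v. Qed.

Lemma nabla_gv x0 x1 x2 x3 x4 x5 x6 x7 y0 y1 y2 y3 y4 y5 y6 y7 : nabla (g_v l m k) (row8 x0 x1 x2 x3 x4 x5 x6 x7) (row8 y0 y1 y2 y3 y4 y5 y6 y7) = row8 0 (- l * x7 * y0) (- x0 * y0) (k * l * x0 * y0 + l * m * x1 * y1) (- k * l * x0 * y7 + l * x7 * y5 - (m * x1 * y2) / 2%:R + (m * x2 * y1) / 2%:R + x0 * y6) (- l * m * x1 * y7 + (m * x0 * y2) / 2%:R - (m * x2 * y0) / 2%:R) (- (m * x0 * y1) / 2%:R + (m * x1 * y0) / 2%:R) 0.
Proof. nabla_tac lie_gv. Qed.

Definition Pv : 'M[R]_8 := mx8 [:: [:: 0; (m); 0; 0; 0; 0; 0; 0]; [:: 0; 0; (m * m); 0; 0; 0; (k * m * m * m); 0]; [:: 0; 0; 0; (m * m); 0; 0; 0; 0]; [:: 0; 0; 0; 0; 0; 0; 0; (1%:R)]; [:: 0; 0; 0; 0; 0; 0; (m * m * m); 0]; [:: 0; 0; 0; 0; (- m * m); 0; 0; 0]; [:: 0; 0; 0; 0; 0; (m * m); 0; 0]; [:: (l * m); 0; 0; 0; 0; 0; 0; 0]].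



Definition Qv : 'M[R]_8 := mx8 [:: [:: 0; 0; 0; 0; 0; 0; 0; 1 / (l * m)]; [:: 1 / m; 0; 0; 0; 0; 0; 0; 0]; [:: 0; 1 / (m * m); 0; 0; - k / (m * m); 0; 0; 0]; [:: 0; 0; 1 / (m * m); 0; 0; 0; 0; 0]; [:: 0; 0; 0; 0; 0; -1 / (m * m); 0; 0]; [:: 0; 0; 0; 0; 0; 0; 1 / (m * m); 0]; [:: 0; 0; 0; 0; 1 / (m * m * m); 0; 0; 0]; [:: 0; 0; 0; 1; 0; 0; 0; 0]].

Lemma lieal_v : is_lie_algebra (g_v l m k).
Proof.
split.
- move=> X Y; rewrite (vec8E X) (vec8E Y) !lie_gv row8N; f_equal; ring.
- move=> X Y Z; rewrite (vec8E X) (vec8E Y) (vec8E Z) !lie_gv !row8D row80; f_equal; ring.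
Qed.

Lemma PQ_v : Pv *m Qv = 1%:M.
Proof.
apply/row_matrixP; apply: ord8_all; rewrite !rowE mulmxA mulmx1 ?delta8_0 ?delta8_1 ?delta8_2 ?delta8_3 ?delta8_4 ?delta8_5 ?delta8_6 ?delta8_7;
rewrite /Pv /Qv !mul_mx8 /cs8; cbn [nth]; f_equal; (field; rewrite ?mulf_neq0 ?hl ?hm //).
Qed.

Lemma iso_v : lie_isomorphic (g_v l m k) (@h_v R).
Proof.
exists Pv; split; first by case: (mulmx1_unit PQ_v).
move=> X Y; rewrite (vec8E X) (vec8E Y) /Pv !mul_mx8 /cs8; cbn [nth].
rewrite lie_hv lie_gv mul_mx8 /cs8; cbn [nth]; f_equal; ring.
Qed.

Lemma npk_v : nearly_parakahler (g_v l m k).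
Proof.
move=> X; rewrite (vec8E X) /nablaK mul_Kmx !nabla_gv mul_Kmx row8B row80; f_equal; ring.
Qed.

Lemma tau1_v : tau1_nonzero (g_v l m k).
Proof.
exists (row8 1 0 0 0 0 0 0 0), (row8 0 1 0 0 0 0 0 0), (row8 0 0 1 0 0 0 0 0).
have -> : dF30 (g_v l m k) (row8 1 0 0 0 0 0 0 0) (row8 0 1 0 0 0 0 0 0) (row8 0 0 1 0 0 0 0 0) = - (3%:R * m).
  rewrite /dF30 !mul_projV /d2 !lie_gv FformE !ev2D ?ev2N ?ev2_ee ?ev2_delta !row8E //=; ring.
by rewrite ?oppr_eq0 mulf_neq0 // pnatr_eq0.
Qed.

Lemma ricci_v : ricci_flat (g_v l m k).
Proof.
move=> X Y; rewrite (vec8E X) (vec8E Y) ricciE sum8 ?delta8_0 ?delta8_1 ?delta8_2 ?delta8_3 ?delta8_4 ?delta8_5 ?delta8_6 ?delta8_7 /curv.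
do 3 rewrite ?lie_gv ?nabla_gv.
rewrite !row8B !row8E //=; ring.
Qed.

Lemma nflat_v : ~ flat (g_v l m k).
Proof.
move=> Hf; have := Hf (row8 1 0 0 0 0 0 0 0) (row8 0 0 0 0 0 0 0 1) (row8 0 1 0 0 0 0 0 0).
rewrite /curv; do 3 rewrite ?lie_gv ?nabla_gv.
rewrite !row8B row80 => /(congr1 (fun v : 'rV[R]_8 => v 0 (inord 3))).
rewrite /= !row8E //= => H.
have : - (l * l * m) = 0 by rewrite -H; ring.
by move/eqP; rewrite oppr_eq0 !mulf_eq0 (negbTE hl) (negbTE hm).
Qed.

Lemma concl_v : conclusion (g_v l m k) (@h_v R).
Proof. exact: (conj lieal_v (conj iso_v (conj npk_v (conj tau1_v (conj ricci_v nflat_v))))). Qed.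

End Cases.

Theorem theorem7p4 (R : realType) (lambda mu k : R) :
  lambda != 0 -> mu != 0 ->
  [/\ conclusion (g_i lambda mu) (@h_i R),
      conclusion (g_ii lambda mu) (@h_ii R),
      conclusion (g_iii lambda mu k) (@h_iii R),
      conclusion (g_iv lambda mu) (@h_iv R) &
      conclusion (g_v lambda mu k) (@h_v R)].
Proof.
move=> hl hm; split.
- by apply: concl_i.
- by apply: concl_ii.
- by apply: concl_iii.
- by apply: concl_iv.
- by apply: concl_v.
Qed.
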